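(* Assume (A1) and (A3) hold. Then there exists a constant $C_0>0$ such that $L(\theta)-L(\theta_0)\ge C_0\,\pi_{\mathbb P}^2(\theta,\theta_0)$ for every $\theta=(\alpha,\beta)\in\mathbb R\times L^2([0,1])$.
   Context: Model: $y\in\{0,1\}$ and $X\in L^2([0,1])$, with $y\mid X\sim\mathrm{Bernoulli}(F(\alpha_0+\langle X,\beta_0\rangle))$, where $F(t)=e^t/(1+e^t)$, $\langle u,v\rangle=\int_0^1uv$, and $\theta_0=(\alpha_0,\beta_0)$. $w$ is a non-negative bounded weight function. Loss: $d(y,t)=-y\log F(t)-(1-y)\log(1-F(t))$, $\psi=\rho'$, $G(t)=\int_0^t\psi(-\log u)\,du$, and $$\phi(y,t)=\rho(d(y,t))+G(F(t))+G(1-F(t)).$$ Objective and discrepancy: $$L(\theta)=\mathbb E\big(\phi(y,\alpha+\langle X,\beta\rangle)w(X)\big),$$ $$\pi_{\mathbb P}^2(\theta,\theta_0)=\mathbb E\big(w(X)[F(\alpha+\langle X,\beta\rangle)-F(\alpha_0+\langle X,\beta_0\rangle)]^2\big).$$ Assumptions: (A1) $\rho:[0,\infty)\to\mathbb R$ is bounded and continuously differentiable, with bounded derivative $\psi$, and $\rho(0)=0$. (A3) $\psi\ge0$, and there exist $a\ge\log2$ and $A_0>0$ with $\psi(t)>A_0$ for $0<t<a$. *)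

(* Defs.v *)
From HB Require Import structures.
From mathcomp Require Import all_boot all_order all_algebra.
From mathcomp Require Import all_classical all_reals all_analysis.
Set Implicit Arguments. Unset Strict Implicit. Unset Printing Implicit Defensive.
Import Order.TTheory GRing.Theory Num.Theory.
Import numFieldNormedType.Exports.
Local Open Scope classical_set_scope.
Local Open Scope ring_scope.

(* Elements of L^2([0,1]) are represented by real functions on R that are
   Lebesgue-measurable on [0,1] and square integrable there. *)
Definition L2 {R : realType} (u : R -> R) : Prop :=
  measurable_fun (`[0%R, 1%R] : set R) u /\
  (\int[lebesgue_measure]_(t in (`[0%R, 1%R] : set R)) ((u t) ^+ 2)%:E < +oo)%E.

Definition inner {R : realType} (u v : R -> R) : R :=
  Rintegral lebesgue_measure (`[0%R, 1%R] : set R) (fun t => u t * v t).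

Definition F {R : realType} (t : R) : R := expR t / (1 + expR t).

Definition dev {R : realType} (y t : R) : R :=
  - y * ln (F t) - (1 - y) * ln (1 - F t).

Definition G {R : realType} (psi : R -> R) (t : R) : R :=
  Rintegral lebesgue_measure (`[0%R, t] : set R) (fun u => psi (- ln u)).

Definition phi {R : realType} (rho psi : R -> R) (y t : R) : R :=
  rho (dev y t) + G psi (F t) + G psi (1 - F t).

(* Sets of the form { f | <f, b> in E }, b in L^2, E Borel: they generate the
   (weak = Borel, L^2 being separable) sigma-algebra on L^2([0,1]). *)
Definition weak_gen {R : realType} : set (set (R -> R)) :=
  [set B | exists b : R -> R, L2 b /\
     exists E : set R, measurable E /\ B = (fun f => inner f b) @^-1` E].

Definition weak_meas {R : realType} : set (set (R -> R)) := <<s (@weak_gen R) >>.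

Definition Lobj {R : realType} {d : measure_display} {Om : measurableType d}
  (P : probability Om R) (rho psi : R -> R) (w : (R -> R) -> R)
  (X : Om -> (R -> R)) (y : Om -> R) (alpha : R) (beta : R -> R) : \bar R :=
  (\int[P]_om (phi rho psi (y om) (alpha + inner (X om) beta) * w (X om))%:E)%E.

Definition pi2 {R : realType} {d : measure_display} {Om : measurableType d}
  (P : probability Om R) (w : (R -> R) -> R) (X : Om -> (R -> R))
  (alpha : R) (beta : R -> R) (alpha0 : R) (beta0 : R -> R) : \bar R :=
  (\int[P]_om (w (X om) *
     (F (alpha + inner (X om) beta) - F (alpha0 + inner (X om) beta0)) ^+ 2)%:E)%E.

(* Main.v *)
Set Warnings "-notation-overridden -deprecated -ambiguous-paths -notation-incompatible-prefix".
Require Import Defs.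
From HB Require Import structures.
From mathcomp Require Import all_boot all_order all_algebra.
From mathcomp Require Import all_classical all_reals all_analysis.
From mathcomp Require Import ring lra measurable_realfun.
Import Order.TTheory GRing.Theory Num.Theory.
Import numFieldNormedType.Exports.
Local Open Scope classical_set_scope.
Local Open Scope ring_scope.
Lemma aux_mul (R : realType) (x D w : R) : 0 <= w -> x <= D -> x * w <= D * w.
Proof. by move=> w0 h; rewrite ler_wpM2r. Qed.

Section calc.
Context (R : realType) (rho psi : R -> R) (Mp Mr a A0 : R).
Hypothesis hrho : forall t : R, 0 < t -> is_derive t 1 rho (psi t).
Hypothesis hpsic : {within (`[0%R, +oo[ : set R), continuous psi}.
Hypothesis hpsib : forall t : R, 0 <= t -> `|psi t| <= Mp.
Hypothesis hpsi0 : forall t : R, 0 <= t -> 0 <= psi t.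
Hypothesis ha : ln 2 <= a.
Hypothesis hrhoc : {within (`[0%R, +oo[ : set R), continuous rho}.
Hypothesis hrhob : forall t : R, 0 <= t -> `|rho t| <= Mr.
Hypothesis hA0 : 0 < A0.
Hypothesis hA : forall t : R, 0 < t < a -> A0 < psi t.

Lemma psi_cont_pos s : 0 < s -> {for s, continuous psi}.
Proof.
move=> s0; have [h _] := (continuous_within_itvcyP 0 psi).1 hpsic.
by apply: h; rewrite in_itv /= andbT.
Qed.

Lemma ln2_gt0 : 0 < ln 2 :> R.
Proof. by apply: ln_gt0; rewrite ltr1n. Qed.

Lemma psi_ln2 : A0 <= psi (ln 2).
Proof.
have c2 := @psi_cont_pos (ln 2) ln2_gt0.
apply: (cvgr_to_ge (cvg_at_left_filter c2)).
near=> x; apply: ltW; apply: hA; apply/andP; split.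
  by near: x; exact: (nbhs_left_gt ln2_gt0).
by apply: (lt_le_trans _ ha); near: x; exact: nbhs_left_lt.
Unshelve. all: by end_near. Qed.

Lemma g_large c : 1/2 <= c < 1 -> A0 <= psi (- ln c).
Proof.
move=> /andP[c2 c1]; have c0 : 0 < c by apply: lt_le_trans c2; lra.
have lnc : 0 < - ln c by rewrite oppr_gt0 ln_lt0 ?c0.
have lnc2 : - ln c <= ln 2.
  rewrite -lnV ?posrE // ler_ln ?posrE ?invr_gt0 //.
  by rewrite -[c^-1]mul1r ler_pdivrMr //; lra.
move: lnc2; rewrite le_eqVlt => /predU1P[->|lt2]; first exact: psi_ln2.
by apply: ltW; apply: hA; rewrite lnc /= (lt_le_trans lt2 ha).
Qed.

Lemma K_ge c : 0 < c < 1 ->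
  A0 <= psi (- ln c) / c + psi (- ln (1 - c)) / (1 - c).
Proof.
move=> /andP[c0 c1].
have p1 : 0 <= psi (- ln c) by apply: hpsi0; rewrite oppr_ge0 ln_le0 // ltW.
have p2 : 0 <= psi (- ln (1 - c)).
  by apply: hpsi0; rewrite oppr_ge0 ln_le0 //; lra.
have [ch|ch] := leP (1/2) c.
  have h1 : A0 <= psi (- ln c) by apply: g_large; rewrite ch c1.
  have : psi (- ln c) <= psi (- ln c) / c.
    by rewrite ler_pdivlMr //; nra.
  have : 0 <= psi (- ln (1 - c)) / (1 - c) by rewrite divr_ge0 //; lra.
  lra.
have : A0 <= psi (- ln (1 - c)) by apply: g_large; apply/andP; split; lra.
have : psi (- ln (1 - c)) <= psi (- ln (1 - c)) / (1 - c).
  by rewrite ler_pdivlMr ?subr_gt0 //; nra.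
have : 0 <= psi (- ln c) / c by rewrite divr_ge0 // ltW.
lra.
Qed.

Lemma Mp_ge0 : 0 <= Mp.
Proof. have := hpsib 0 (lexx 0); have := normr_ge0 (psi 0); lra. Qed.

Lemma g_meas01 : measurable_fun (`[0%R, 1%R] : set R) (fun u => psi (- ln u)).
Proof.
apply: (@measurable_comp _ _ _ _ _ _ (`[0%R, +oo[ : set R) psi _ (fun u => - ln u)).
- exact: measurable_itv.
- move=> z [u /=]; rewrite in_itv /= => /andP[_ u1] <-.
  by rewrite in_itv /= andbT oppr_ge0 ln_le0.
- exact: measurable_realfun.subspace_continuous_measurable_fun.
- apply: measurable_funTS; apply: measurable_realfun.measurable_funN; exact: measurable_realfun.measurable_ln.
Qed.

Lemma bounded_of (T : Type) (A : set T) (f : T -> R) M :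
  (forall x, A x -> `|f x| <= M) -> [bounded f x | x in A].
Proof.
move=> h; exists M; split; first exact: num_real.
by move=> M' MM' x Ax; exact: le_trans (h x Ax) (ltW MM').
Qed.

Lemma g_int01 : lebesgue_measure.-integrable (`[0%R, 1%R] : set R)
  (EFin \o (fun u => psi (- ln u))).
Proof.
apply: measurable_bounded_integrable.
- exact: measurable_itv.
- have := @lebesgue_measure_itv R `[0%R, 1%R]; rewrite /= lte01 => h; rewrite h; exact: ltry.
- exact: g_meas01.
- apply: (@bounded_of _ _ _ Mp) => u /=; rewrite in_itv /= => /andP[_ u1].
  by apply: hpsib; rewrite oppr_ge0 ln_le0.
Qed.

Lemma G_deriv (p : R) : 0 < p < 1 -> is_derive p 1 (G psi) (psi (- ln p)).
Proof.
move=> /andP[p0 p1].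
have cg : {for p, continuous (fun u => psi (- ln u))}.
  apply: continuous_comp; last first.
    apply: psi_cont_pos; rewrite oppr_gt0; apply: ln_lt0; by rewrite p0 p1.
  apply: continuousN; exact: continuous_ln.
have [d1 d2] := @continuous_FTC1_closed R (fun u => psi (- ln u)) 0 p 1 p1 g_int01 p0 cg.
apply: is_derive_eq (derivableP d1) _.
by rewrite -derive1E.
Qed.

Lemma G_bound (x : R) : 0 <= x <= 1 -> 0 <= G psi x <= Mp.
Proof.
move=> /andP[x0 x1]; apply/andP; split.
  apply: Rintegral_ge0 => u /=; rewrite in_itv /= => /andP[_ ux].
  by apply: hpsi0; rewrite oppr_ge0 ln_le0 // (le_trans ux).
have sub : (`[0%R, x] : set R) `<=` `[0%R, 1%R].
  by apply: subset_itvl; rewrite bnd_simp.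
have intx : lebesgue_measure.-integrable (`[0%R, x] : set R)
    (EFin \o (fun u => psi (- ln u))).
  by apply: integrableS g_int01 => //; exact: measurable_itv.
apply: (@le_trans _ _ (Rintegral lebesgue_measure (`[0%R, x] : set R) (fun=> Mp))).
  have intc : lebesgue_measure.-integrable (`[0%R, x] : set R) (EFin \o (fun=> Mp)).
    apply: measurable_bounded_integrable.
    + exact: measurable_itv.
    + have h := @lebesgue_measure_itv R `[0%R, x].
      have hf : (lebesgue_measure (`[0%R, x] : set R) < +oo)%E.
        by rewrite h; case: ifP => // _; rewrite ltry.
      exact: hf.

    + exact: measurable_cst.
    + by apply: (@bounded_of _ _ _ `|Mp|) => u _.
  apply: le_Rintegral; [exact: measurable_itv|exact: intx|exact: intc|].
  move=> u /=; rewrite in_itv /= => /andP[_ ux].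
  apply: le_trans (hpsib _ _); first exact: ler_norm.
  by rewrite oppr_ge0 ln_le0 // (le_trans ux).
rewrite Rintegral_cst; last exact: measurable_itv.
have h := @lebesgue_measure_itv R `[0%R, x].
have M0 := Mp_ge0.
have hm : fine (lebesgue_measure (`[0%R, x] : set R)) <= 1.
  by rewrite h /=; case: ifP => _ /=; rewrite ?subr0 // ler01.
apply: le_trans (ler_wpM2l M0 hm) _.
by rewrite mulr1.
Qed.


Definition Hq (q p : R) : R := q * rho (- ln p) + (1 - q) * rho (- ln (1 - p))
  + G psi p + G psi (1 - p) - A0 / 2 * (p - q) ^+ 2.

Definition dHq (q p : R) : R :=
  (p - q) * (psi (- ln p) / p + psi (- ln (1 - p)) / (1 - p) - A0).

Lemma H_deriv (q p : R) : 0 < p < 1 -> is_derive p 1 (Hq q) (dHq q p).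
Proof.
move=> /andP[p0 p1].
have q1p : 0 < 1 - p by lra.
have dl : is_derive p 1 (fun x => - ln x) (- p^-1).
  exact: (is_deriveN (is_derive1_ln p0)).
have d1 : is_derive p 1 (fun x => rho (- ln x)) (psi (- ln p) * - p^-1).
  apply: (@is_derive1_comp _ rho (fun x => - ln x)) => //.
  by apply: hrho; rewrite oppr_gt0 ln_lt0 // p0 p1.
have dm : is_derive p 1 (fun x : R => 1 - x) (-1).
  apply: is_derive_eq (is_deriveB (is_derive_cst (1:R) p 1) (is_derive_id p 1)) _.
  by rewrite sub0r.
have dl2 : is_derive p 1 (fun x => - ln (1 - x)) (- ((1 - p)^-1 * -1)).
  have dl1 : is_derive p 1 ((@ln R) \o (fun x => 1 - x)) ((1 - p)^-1 * -1).
    apply: (@is_derive1_comp R (@ln R) (fun x => 1 - x) p ((1-p)^-1) (-1)) => //.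
    exact: is_derive1_ln.
  exact: (is_deriveN dl1).
have d2 : is_derive p 1 (fun x => rho (- ln (1 - x)))
    (psi (- ln (1 - p)) * - ((1 - p)^-1 * -1)).
  apply: (@is_derive1_comp _ rho (fun x => - ln (1 - x))) => //.
  by apply: hrho; rewrite oppr_gt0 ln_lt0 //; apply/andP; split; lra.
have dG1 : is_derive p 1 (G psi) (psi (- ln p)) by apply: G_deriv; rewrite p0 p1.
have dG2 : is_derive p 1 (fun x => G psi (1 - x)) (psi (- ln (1 - p)) * -1).
  apply: (@is_derive1_comp _ (G psi) (fun x => 1 - x)) => //.
  by apply: G_deriv; apply/andP; split; lra.
have dlin : is_derive p 1 (fun x : R => x - q) 1.
  apply: is_derive_eq (is_deriveB (is_derive_id p 1) (is_derive_cst q p 1)) _.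
  by rewrite subr0.
have dsq := is_deriveX 2 dlin.
have h := is_deriveB (is_deriveD (is_deriveD (is_deriveD (is_deriveZ q d1)
   (is_deriveZ (1 - q) d2)) dG1) dG2) (is_deriveZ (A0 / 2) dsq).
apply: (@is_derive_eq _ _ _ (Hq q) p 1 _ _ h).
rewrite /dHq /GRing.scale /=.
have pn0 : p != 0 by rewrite gt_eqF.
have qn0 : 1 - p != 0 by rewrite gt_eqF.
field.
by rewrite qn0 pn0.
Qed.


Lemma dHq_sign (q c : R) : 0 < c < 1 -> 0 <= (c - q) * dHq q c.
Proof.
move=> c01; have := @K_ge c c01; rewrite /dHq => hK.
rewrite mulrA; apply: mulr_ge0; last by lra.
rewrite -expr2; exact: sqr_ge0.
Qed.

Lemma H_min (q p : R) : 0 < q < 1 -> 0 < p < 1 -> Hq q q <= Hq q p.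
Proof.
move=> /andP[q0 q1] /andP[p0 p1].
have gen : forall u v : R, 0 < u -> v < 1 -> u <= v ->
    exists2 c, u <= c <= v & Hq q v - Hq q u = dHq q c * (v - u).
  move=> u v u0 v1 uv.
  have hd : forall x, x \in `]u, v[ -> is_derive x 1 (Hq q) (dHq q x).
    move=> x; rewrite in_itv /= => /andP[ux xv]; apply: H_deriv.
    by apply/andP; split; lra.
  have hc : {within `[u, v], continuous (Hq q)}.
    apply: derivable_within_continuous => x; rewrite in_itv /= => /andP[ux xv].
    have [] // := @H_deriv q x; apply/andP; split; lra.
  have [c cuv e] := MVT_segment uv hd hc.
  by move: cuv; rewrite in_itv /= => cuv; exists c.
have [pq|pq] := leP q p.
  have [c /andP[qc cp] e] := gen q p q0 p1 pq.
  have c01 : 0 < c < 1 by apply/andP; split; lra.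
  have := @dHq_sign q c c01.
  have : 0 <= (dHq q c) * (p - q) * (c - q) -> 0 <= Hq q p - Hq q q.
    rewrite -e => h.
    have [cq|cq] := eqVneq c q.
      by move: e; rewrite cq /dHq subrr !mul0r => ->.
    by rewrite -(@pmulr_lge0 _ (c - q)) ?subr_gt0 ?lt_neqAle 1?eq_sym ?cq.
  nra.
have [c /andP[pc cq] e] := gen p q p0 q1 (ltW pq).
have c01 : 0 < c < 1 by apply/andP; split; lra.
have := @dHq_sign q c c01.
have : (dHq q c) * (q - p) * (q - c) <= 0 -> Hq q q - Hq q p <= 0.
  rewrite -e => h.
  have [cq'|cq'] := eqVneq c q.
    by move: e; rewrite cq' /dHq subrr !mul0r => ->.
  by rewrite -(@pmulr_lle0 _ (q - c)) ?subr_gt0 ?lt_neqAle ?cq ?andbT // eq_sym.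
nra.
Qed.

Lemma F_gt0 (t : R) : 0 < F t.
Proof. by rewrite /F divr_gt0 // ?expR_gt0 // addr_gt0 // expR_gt0. Qed.

Lemma F_lt1 (t : R) : F t < 1.
Proof.
rewrite /F ltr_pdivrMr ?mul1r; last by rewrite addr_gt0 // expR_gt0.
by rewrite ltrDr.
Qed.

Lemma F_cont (t : R) : {for t, continuous (@F R)}.
Proof.
have h1 : {for t, continuous (fun t : R => (1 + expR t)^-1)}.
  apply: continuousV; first by rewrite gt_eqF // addr_gt0 // expR_gt0.
  have h : {for t, continuous (cst (1:R) + expR)}.
    by apply: continuousD; [exact: cst_continuous|exact: continuous_expR].
  exact: h.
have h := continuousM (s := expR) (t := fun t : R => (1 + expR t)^-1) (x := t) (@continuous_expR R t) h1.
exact: h.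
Qed.

Lemma rho_cont_pos (s : R) : 0 < s -> {for s, continuous rho}.
Proof.
move=> s0; have [h _] := (continuous_within_itvcyP 0 rho).1 hrhoc.
by apply: h; rewrite in_itv /= andbT.
Qed.

Lemma Af_cont : continuous (fun t : R => rho (- ln (F t))).
Proof.
move=> t.
have c1 : {for t, continuous (fun t : R => - ln (F t))}.
  have c1' : {for t, continuous ((@ln R) \o (@F R))}.
    exact: (continuous_comp (F_cont t) (continuous_ln (F_gt0 t))).
  have h := continuousN c1'; exact: h.
have r0 : 0 < - ln (F t) by rewrite oppr_gt0 ln_lt0 // F_gt0 F_lt1.
have h := continuous_comp c1 (@rho_cont_pos _ r0); exact: h.
Qed.

Lemma Bf_cont : continuous (fun t : R => rho (- ln (1 - F t))).
Proof.
move=> t.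
have c0 : {for t, continuous (fun t : R => 1 - F t)}.
  have h : {for t, continuous (cst (1:R) - @F R)}.
    by apply: continuousB; [exact: cst_continuous|exact: F_cont].
  exact: h.
have p0 : 0 < 1 - F t by rewrite subr_gt0 F_lt1.
have c1 : {for t, continuous (fun t : R => - ln (1 - F t))}.
  have c1' : {for t, continuous ((@ln R) \o (fun t : R => 1 - F t))}.
    exact: (continuous_comp c0 (continuous_ln p0)).
  have h := continuousN c1'; exact: h.
have r0 : 0 < - ln (1 - F t) by rewrite oppr_gt0 ln_lt0 // p0 /= gtrBl F_gt0.
have h := continuous_comp c1 (@rho_cont_pos _ r0); exact: h.
Qed.


Lemma G_cont (p : R) : 0 < p < 1 -> {for p, continuous (G psi)}.
Proof.
move=> hp; have d := @G_deriv p hp.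
have d1 : derivable (G psi) p 1 by case: d.
have := differentiable_continuous ((derivable1_diffP _ _).1 d1).
by [].
Qed.

Lemma Gf_cont : continuous (fun t : R => G psi (F t) + G psi (1 - F t)).
Proof.
move=> t.
have c0 : {for t, continuous (fun t : R => 1 - F t)}.
  have h : {for t, continuous (cst (1:R) - @F R)}.
    by apply: continuousB; [exact: cst_continuous|exact: F_cont].
  exact: h.
have p1 : 0 < F t < 1 by rewrite F_gt0 F_lt1.
have p2 : 0 < 1 - F t < 1 by rewrite subr_gt0 F_lt1 /= gtrBl F_gt0.
have h1 := continuous_comp (F_cont t) (@G_cont _ p1).
have h2 := continuous_comp c0 (@G_cont _ p2).
have h := continuousD h1 h2; exact: h.
Qed.

Lemma Af_bound (t : R) : `|rho (- ln (F t))| <= Mr.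
Proof. by apply: hrhob; rewrite oppr_ge0 ln_le0 // ltW // F_lt1. Qed.

Lemma Bf_bound (t : R) : `|rho (- ln (1 - F t))| <= Mr.
Proof. by apply: hrhob; rewrite oppr_ge0 ln_le0 // gerBl ltW // F_gt0. Qed.

Lemma Gf_bound (t : R) : 0 <= G psi (F t) + G psi (1 - F t) <= Mp + Mp.
Proof.
have /andP[a1 a2] : 0 <= G psi (F t) <= Mp.
  by apply: G_bound; rewrite ltW ?F_gt0 // ltW // F_lt1.
have /andP[b1 b2] : 0 <= G psi (1 - F t) <= Mp.
  by apply: G_bound; rewrite subr_ge0 ltW ?F_lt1 // gerBl ltW // F_gt0.
by apply/andP; split; lra.
Qed.

Definition hq (q t : R) : R := q * (rho (- ln (F t)) - rho (- ln (1 - F t)))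
  + (rho (- ln (1 - F t)) + (G psi (F t) + G psi (1 - F t))).

Lemma phi_eq (y t : R) : y = 0 \/ y = 1 -> phi rho psi y t = hq y t.
Proof.
rewrite /phi /hq /dev => -[->|->].
  have -> : - 0 * ln (F t) - (1 - 0) * ln (1 - F t) = - ln (1 - F t) by ring.
  ring.
have -> : - 1 * ln (F t) - (1 - 1) * ln (1 - F t) = - ln (F t) by ring.
ring.
Qed.

Lemma KPI (t t0 : R) : A0 / 2 * (F t - F t0) ^+ 2 <= hq (F t0) t - hq (F t0) t0.
Proof.
have q01 : 0 < F t0 < 1 by rewrite F_gt0 F_lt1.
have p01 : 0 < F t < 1 by rewrite F_gt0 F_lt1.
have := @H_min (F t0) (F t) q01 p01.
have -> : Hq (F t0) (F t0) = hq (F t0) t0.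
  by rewrite /Hq /hq subrr expr0n /= mulr0 subr0; ring.
have -> : Hq (F t0) (F t) = hq (F t0) t - A0 / 2 * (F t - F t0) ^+ 2.
  by rewrite /Hq /hq; ring.
set X := A0 / 2 * _; lra.
Qed.

Context (d : measure_display) (Om : measurableType d)
  (P : probability Om R) (X : Om -> (R -> R)) (y : Om -> R) (alpha0 : R)
  (beta0 : R -> R) (w : (R -> R) -> R) (Mw : R).
Hypothesis hX : forall b, L2 b -> measurable_fun setT (fun om => inner (X om) b).
Hypothesis hy01 : forall om, y om = 0 \/ y om = 1.
Hypothesis hym : measurable_fun setT y.
Hypothesis hb0 : L2 beta0.
Hypothesis hcond : forall A, weak_meas A ->
     P (X @^-1` A `&` y @^-1` [set 1]) =
     (\int[P]_(om in X @^-1` A) (F (alpha0 + inner (X om) beta0))%:E)%E.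
Hypothesis hw : forall E : set R, measurable E -> weak_meas (w @^-1` E).

Local Notation T := (g_sigma_algebraType (@weak_gen R)).

Lemma X_meas : measurable_fun setT (X : Om -> T).
Proof.
apply: (@measurability _ _ _ _ setT (X : Om -> T) (@weak_gen R)) => //.
move=> _ [B [b [Lb [E [mE ->]]]] <-].
have h := hX _ Lb measurableT _ mE; exact h.
Qed.

Lemma inner_meas b : L2 b -> measurable_fun setT (fun f : T => inner f b).
Proof.
move=> Lb _ E mE; rewrite setTI; apply: sub_sigma_algebra.
by exists b; split => //; exists E.
Qed.

Lemma w_meas : measurable_fun setT (w : T -> R).
Proof. by move=> _ E mE; rewrite setTI; exact: hw. Qed.

Definition p0 om := F (alpha0 + inner (X om) beta0).

Lemma F_continuous : continuous (@F R).
Proof. by move=> t; exact: F_cont. Qed.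

Lemma p0_meas : measurable_fun setT p0.
Proof.
apply: (measurableT_comp (continuous_measurable_fun F_continuous)).
exact: (measurable_funD (measurable_cst _) (hX _ hb0)).
Qed.

Lemma p0_ge0 om : 0 <= p0 om.
Proof. exact/ltW/F_gt0. Qed.

Lemma p0_le1 om : p0 om <= 1.
Proof. exact/ltW/F_lt1. Qed.

Lemma y_ge0 om : 0 <= y om.
Proof. by case: (hy01 om) => ->. Qed.

Lemma y_le1 om : y om <= 1.
Proof. by case: (hy01 om) => ->. Qed.

Lemma KL_ind (A : set T) : measurable A ->
  (\int[P]_om (y om * \1_(X @^-1` A) om)%:E =
   \int[P]_om (p0 om * \1_(X @^-1` A) om)%:E)%E.
Proof.
move=> mA.
have mXA : measurable (X @^-1` A) by rewrite -[X @^-1` A]setTI; exact: X_meas.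
have my1 : measurable (y @^-1` [set 1]).
  by rewrite -[y @^-1` _]setTI; exact: hym.
transitivity (\int[P]_om (\1_(X @^-1` A `&` y @^-1` [set 1]) om)%:E)%E.
  apply: eq_integral => om _; rewrite indicI /= [\1_(y @^-1` _) om]indicE.
  case: (hy01 om) => e.
    have -> : (om \in y @^-1` [set 1]) = false.
      by apply/memNset; rewrite /preimage /= e => /esym/eqP; rewrite oner_eq0.
    by rewrite e mul0r mulr0.
  have -> : (om \in y @^-1` [set 1]) = true by apply/mem_set; rewrite /preimage /= e.
  by rewrite e mulr1 mul1r.
rewrite integral_indic //; last exact: measurableI.
rewrite setIT.
transitivity (\int[P]_(om in X @^-1` A) (p0 om)%:E)%E; first exact: (hcond _ mA).
rewrite integral_mkcond; apply: eq_integral => om _.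
rewrite /patch indicE; case: ifP => _ /=; first by rewrite mulr1.
by rewrite mulr0.
Qed.


Import HBNNSimple.

Lemma KL_simple (s : {nnsfun T >-> R}) :
  (\int[P]_om (y om * s (X om))%:E = \int[P]_om (p0 om * s (X om))%:E)%E.
Proof.
have fin : finite_set (range s) by exact: fimfunP.
pose B r := X @^-1` (s @^-1` [set r]).
have mS r : measurable (s @^-1` [set r] : set T).
  by rewrite -[_ @^-1` _]setTI; apply: measurable_funPT => //; exact: measurable_set1.
have mB r : measurable (B r) by rewrite /B -[X @^-1` _]setTI; exact: X_meas.
have B0 r : r < 0 -> B r = set0 by move=> r0; rewrite /B preimage_nnfun0.
have key : forall c : Om -> R, measurable_fun setT c -> (forall om, 0 <= c om) ->
   (\int[P]_om (c om * s (X om))%:E =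
    \sum_(r \in range s) \int[P]_om (r * (c om * \1_(B r) om))%:E)%E.
  move=> c mc c0.
  rewrite -ge0_integral_fsum //.
  - apply: eq_integral => om _; rewrite fsumEFin //; congr EFin.
    rewrite (fimfunE s (X om)) fsbig_distrr //; apply: eq_fsbigr => r _.
    have -> : \1_(B r) om = \1_(s @^-1` [set r]) (X om) :> R by rewrite !indicE.
    by rewrite mulrCA.
  - move=> r; apply/measurable_EFinP.
    apply: measurable_funM; first exact: measurable_cst.
    by apply: measurable_funM => //; exact: measurable_indic.
  - move=> r om _; rewrite lee_fin; case: (ltP r 0) => r0.
      by rewrite B0 // indic0 !mulr0.
    by apply: mulr_ge0 => //; apply: mulr_ge0 => //; rewrite indicE.
rewrite (key y hym y_ge0) (key p0 p0_meas p0_ge0).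
apply: eq_fsbigr => r _.
case: (ltP r 0) => r0.
  by apply: eq_integral => om _; rewrite B0 // indic0 !mulr0.
rewrite (eq_integral (fun om : Om => (r%:E * (y om * \1_(B r) om)%:E)%E)); last first.
  by move=> om _; rewrite EFinM.
rewrite [in RHS](eq_integral (fun om : Om => (r%:E * (p0 om * \1_(B r) om)%:E)%E)); last first.
  by move=> om _; rewrite EFinM.
rewrite ge0_integralZl_EFin //; last 2 first.
  - move=> om _; rewrite lee_fin; apply: mulr_ge0; [exact: y_ge0|by rewrite indicE].
  - apply/measurable_EFinP; apply: measurable_funM => //; exact: measurable_indic.
rewrite ge0_integralZl_EFin //; last 2 first.
  - move=> om _; rewrite lee_fin; apply: mulr_ge0; [exact: p0_ge0|by rewrite indicE].
  - apply/measurable_EFinP; apply: measurable_funM; first exact: p0_meas.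
    exact: (measurable_indic (mB r)).
by rewrite /B KL_ind.
Qed.


Lemma KL_nonneg (k : T -> R) : measurable_fun setT k -> (forall f, 0 <= k f) ->
  (\int[P]_om (y om * k (X om))%:E = \int[P]_om (p0 om * k (X om))%:E)%E.
Proof.
move=> mk k0.
have mEk : measurable_fun setT (EFin \o k) by apply/measurable_EFinP.
pose s := nnsfun_approx measurableT mEk.
have key : forall c : Om -> R, measurable_fun setT c -> (forall om, 0 <= c om) ->
   (\int[P]_om (c om * k (X om))%:E =
    limn (fun n => \int[P]_om (c om * s n (X om))%:E))%E.
  move=> c mc c0.
  rewrite -monotone_convergence //.
  - apply: eq_integral => om _; apply/esym/cvg_lim => //.
    have k0E : forall x : T, setT x -> (0 <= (EFin \o k) x)%E.
      by move=> x _; rewrite /= lee_fin.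
    have h := cvg_nnsfun_approx measurableT mEk k0E (x := X om) Logic.I.
    have h2 := cvgeZl (y := (c om)%:E) isT h.
    have -> : (fun n => (c om * s n (X om))%:E) =
       (fun n => ((c om)%:E * (EFin \o (fun n => s n (X om))) n)%E).
      by apply/funext => n; rewrite EFinM.
    by rewrite EFinM; exact: h2.
  - move=> n; apply/measurable_EFinP; apply: measurable_funM => //.
    exact: (measurableT_comp (measurable_funPT (s n)) X_meas).
  - by move=> n om _; rewrite lee_fin; apply: mulr_ge0.
  - move=> om _ m n mn; rewrite lee_fin; apply: ler_wpM2l => //.
    by have := nd_nnsfun_approx measurableT mEk mn => /lefP; apply.
rewrite (key y hym y_ge0) (key p0 p0_meas p0_ge0).
by under eq_fun do rewrite KL_simple.
Qed.

Lemma bnd_int (f : Om -> R) M : measurable_fun setT f -> (forall om, `|f om| <= M) ->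
  P.-integrable setT (EFin \o f).
Proof.
move=> mf hM; apply: measurable_bounded_integrable => //.
  apply: (le_lt_trans (probability_le1 P measurableT)); exact: ltry.
exact: (@bounded_of _ _ _ M).
Qed.

Lemma KL_bnd (k : T -> R) M : measurable_fun setT k -> (forall f, `|k f| <= M) ->
  (\int[P]_om (y om * k (X om))%:E = \int[P]_om (p0 om * k (X om))%:E)%E.
Proof.
move=> mk hM.
have M0 : 0 <= M.
  have := hM (fun _ : R => (0:R)); have := normr_ge0 (k (fun _ : R => (0:R))); lra.
have mkX : measurable_fun setT (fun om => k (X om)).
  exact: (measurableT_comp mk X_meas).
pose k' := fun f : T => k f + M.
have mk' : measurable_fun setT k' by apply: measurable_funD => //; exact: measurable_cst.
have k'0 : forall f, 0 <= k' f.
  by move=> f; have := hM f; rewrite ler_norml /k' => /andP[h _]; lra.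
have e : forall c : Om -> R, measurable_fun setT c -> (forall om, 0 <= c om <= 1) ->
  (\int[P]_om (c om * k (X om))%:E =
   \int[P]_om (c om * k' (X om))%:E - \int[P]_om (c om * cst M (X om))%:E)%E.
  move=> c mc c01.
  rewrite -integralB_EFin //.
  - by apply: eq_integral => om _; rewrite -EFinB /k' /=; congr EFin; ring.
  - apply: (@bnd_int _ (M + M)).
      by apply: measurable_funM => //; exact: (measurableT_comp mk' X_meas).
    move=> om; have /andP[c0 c1] := c01 om; rewrite normrM.
    have : `|k' (X om)| <= M + M.
      rewrite /k'; apply: le_trans (ler_normD _ _) _; rewrite (ger0_norm M0).
      by apply: lerD => //.
    have : `|c om| <= 1 by rewrite ger0_norm.
    have := normr_ge0 (c om); have := normr_ge0 (k' (X om)); nra.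
  - apply: (@bnd_int _ M); first by apply: measurable_funM => //; exact: measurable_cst.
    move=> om; have /andP[c0 c1] := c01 om; rewrite normrM /= (ger0_norm M0) ger0_norm //.
    nra.
have y01 : forall om, 0 <= y om <= 1 by move=> om; rewrite y_ge0 y_le1.
have p01 : forall om, 0 <= p0 om <= 1 by move=> om; rewrite p0_ge0 p0_le1.
rewrite (e y hym y01) (e p0 p0_meas p01).
rewrite (@KL_nonneg k' mk' k'0) (@KL_nonneg (cst M) (measurable_cst M) (fun=> M0)).
by [].
Qed.


Hypothesis hw0 : forall f, 0 <= w f.
Hypothesis hwb : forall f, w f <= Mw.

Lemma Lobj_eq alpha beta : L2 beta ->
  Lobj P rho psi w X y alpha beta =
  (\int[P]_om (hq (p0 om) (alpha + inner (X om) beta) * w (X om))%:E)%E.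
Proof.
move=> Lb.
pose tf := fun f : T => alpha + inner f beta.
have mtf : measurable_fun setT tf.
  exact: (measurable_funD (measurable_cst alpha) (@inner_meas beta Lb)).
have mA : measurable_fun setT (fun f : T => rho (- ln (F (tf f)))).
  exact: (measurableT_comp (continuous_measurable_fun Af_cont) mtf).
have mB : measurable_fun setT (fun f : T => rho (- ln (1 - F (tf f)))).
  exact: (measurableT_comp (continuous_measurable_fun Bf_cont) mtf).
have mG : measurable_fun setT (fun f : T => G psi (F (tf f)) + G psi (1 - F (tf f))).
  exact: (measurableT_comp (continuous_measurable_fun Gf_cont) mtf).
pose k1 := fun f : T => (rho (- ln (F (tf f))) - rho (- ln (1 - F (tf f)))) * w f.
pose k2 := fun f : T =>
  (rho (- ln (1 - F (tf f))) + (G psi (F (tf f)) + G psi (1 - F (tf f)))) * w f.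
have mk1 : measurable_fun setT k1.
  by apply: measurable_funM; [exact: measurable_funB|exact: w_meas].
have mk2 : measurable_fun setT k2.
  by apply: measurable_funM; [exact: measurable_funD|exact: w_meas].
have wb f : `|w f| <= Mw by rewrite ger0_norm.
have Mw0 : 0 <= Mw by exact: le_trans (hw0 (fun _ : R => (0:R))) (hwb _).
have bk1 f : `|k1 f| <= (Mr + Mr) * Mw.
  rewrite /k1 normrM; apply: ler_pM => //.
  by apply: le_trans (ler_normB _ _) _; apply: lerD; [exact: Af_bound|exact: Bf_bound].
have bk2 f : `|k2 f| <= (Mr + (Mp + Mp)) * Mw.
  rewrite /k2 normrM; apply: ler_pM => //.
  apply: le_trans (ler_normD _ _) _; apply: lerD; first exact: Bf_bound.
  have /andP[g0 g1] := Gf_bound (tf f).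
  by rewrite ger0_norm.
have i1 : P.-integrable setT (EFin \o (fun om => y om * k1 (X om))).
  apply: (@bnd_int _ ((Mr + Mr) * Mw)).
    by apply: measurable_funM => //; exact: (measurableT_comp mk1 X_meas).
  move=> om; rewrite normrM; have := bk1 (X om); have := normr_ge0 (k1 (X om)).
  have : `|y om| <= 1 by rewrite ger0_norm ?y_ge0 ?y_le1.
  have := normr_ge0 (y om); nra.
have i1' : P.-integrable setT (EFin \o (fun om => p0 om * k1 (X om))).
  apply: (@bnd_int _ ((Mr + Mr) * Mw)).
    by apply: measurable_funM; [exact: p0_meas|exact: (measurableT_comp mk1 X_meas)].
  move=> om; rewrite normrM; have := bk1 (X om); have := normr_ge0 (k1 (X om)).
  have : `|p0 om| <= 1 by rewrite ger0_norm ?p0_ge0 ?p0_le1.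
  have := normr_ge0 (p0 om); nra.
have i2 : P.-integrable setT (EFin \o (fun om => k2 (X om))).
  apply: (@bnd_int _ ((Mr + (Mp + Mp)) * Mw)) => //.
  exact: (measurableT_comp mk2 X_meas).
rewrite /Lobj.
transitivity (\int[P]_x (((EFin \o (fun om : Om => (y om * k1 (X om))%R)) \+
                         (EFin \o (fun om : Om => k2 (X om)))) x))%E.
  apply: eq_integral => om _; rewrite /= -EFinD phi_eq //; congr EFin.
  by rewrite /hq /k1 /k2 /tf; ring.
rewrite integralD_EFin // (@KL_bnd k1 ((Mr + Mr) * Mw)) // -integralD_EFin //.
apply: eq_integral => om _; rewrite /= -EFinD; congr EFin.
by rewrite /hq /k1 /k2 /tf; ring.
Qed.

Lemma main_ineq : exists C0 : R, 0 < C0 /\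
    forall (alpha : R) (beta : R -> R), L2 beta ->
      (Lobj P rho psi w X y alpha beta - Lobj P rho psi w X y alpha0 beta0
        >= C0%:E * pi2 P w X alpha beta alpha0 beta0)%E.
Proof.
exists (A0 / 2); split; first by rewrite divr_gt0.
move=> alpha beta Lb.
rewrite (@Lobj_eq alpha beta Lb) (@Lobj_eq alpha0 beta0 hb0).
have Mw0 : 0 <= Mw by exact: le_trans (hw0 (fun _ : R => (0:R))) (hwb _).
have intH : forall al be, L2 be -> P.-integrable setT
    (EFin \o (fun om => hq (p0 om) (al + inner (X om) be) * w (X om))).
  move=> al be Lbe.
  have mt : measurable_fun setT (fun om => al + inner (X om) be).
    exact: (measurable_funD (measurable_cst al) (hX _ Lbe)).
  apply: (@bnd_int _ ((Mr + Mr + (Mr + (Mp + Mp))) * Mw)).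
    apply: measurable_funM; last exact: (measurableT_comp w_meas X_meas).
    rewrite /hq; apply: measurable_funD.
      apply: measurable_funM; first exact: p0_meas.
      apply: measurable_funB.
        exact: (measurableT_comp (continuous_measurable_fun Af_cont) mt).
      exact: (measurableT_comp (continuous_measurable_fun Bf_cont) mt).
    apply: measurable_funD.
      exact: (measurableT_comp (continuous_measurable_fun Bf_cont) mt).
    exact: (measurableT_comp (continuous_measurable_fun Gf_cont) mt).
  move=> om; rewrite normrM (ger0_norm (hw0 _)).
  apply: ler_pM; [exact: normr_ge0|exact: hw0| |exact: hwb].
  rewrite /hq; set t := al + inner (X om) be.
  have hA' := Af_bound t; have hB' := Bf_bound t.
  have /andP[g0 g1] := Gf_bound t.
  have q0 := p0_ge0 om; have q1 := p0_le1 om.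
  apply: le_trans (ler_normD _ _) _; apply: lerD.
    rewrite normrM -[Mr + Mr]mul1r; apply: ler_pM => //.
      by rewrite ger0_norm.
    by apply: le_trans (ler_normB _ _) _; apply: lerD.
  apply: le_trans (ler_normD _ _) _; apply: lerD => //.
  by rewrite ger0_norm.
rewrite -integralB_EFin //; [|exact: intH|exact: intH].
rewrite /pi2 -ge0_integralZl_EFin //; last 3 first.
- by move=> om _; rewrite lee_fin; apply: mulr_ge0 => //; exact: sqr_ge0.
- apply/measurable_EFinP; apply: measurable_funM.
    exact: (measurableT_comp w_meas X_meas).
  apply: measurable_funX; apply: measurable_funB.
    apply: (measurableT_comp (continuous_measurable_fun F_continuous)).
    exact: (measurable_funD (measurable_cst alpha) (hX _ Lb)).
  exact: p0_meas.
- by rewrite divr_ge0 // ltW.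
apply: ge0_le_integral => //.
- move=> om _; apply: mule_ge0; first by rewrite lee_fin divr_ge0 // ltW.
  by rewrite lee_fin; apply: mulr_ge0 => //; exact: sqr_ge0.
- apply: measurable_funeM; apply/measurable_EFinP; apply: measurable_funM.
    exact: (measurableT_comp w_meas X_meas).
  apply: measurable_funX; apply: measurable_funB.
    apply: (measurableT_comp (continuous_measurable_fun F_continuous)).
    exact: (measurable_funD (measurable_cst alpha) (hX _ Lb)).
  exact: p0_meas.
- apply: emeasurable_funB.
    exact: (measurable_int _ (intH _ _ Lb)).
  exact: (measurable_int _ (intH _ _ hb0)).
- move=> om _; rewrite -EFinM -EFinB lee_fin.
  have := KPI (alpha + inner (X om) beta) (alpha0 + inner (X om) beta0).
  rewrite /p0 => h.
  have w0 := hw0 (X om).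
  rewrite -mulrBl.
  have -> : forall Q, A0 / 2 * (w (X om) * Q) = A0 / 2 * Q * w (X om) by move=> Q; ring.
  exact: aux_mul w0 h.
Qed.

End calc.

Theorem lemmaA3 (R : realType) (d : measure_display) (Om : measurableType d)
  (P : probability Om R)
  (X : Om -> (R -> R)) (y : Om -> R) (alpha0 : R) (beta0 : R -> R)
  (w : (R -> R) -> R) (rho psi : R -> R) :
  (* X is a random element of L^2([0,1]) *)
  (forall om, L2 (X om)) ->
  (forall b, L2 b -> measurable_fun setT (fun om => inner (X om) b)) ->
  (* y is {0,1}-valued and y | X ~ Bernoulli(F(alpha0 + <X, beta0>)) *)
  (forall om, y om = 0 \/ y om = 1) ->
  measurable_fun setT y ->
  L2 beta0 ->
  (forall A, weak_meas A ->
     P (X @^-1` A `&` y @^-1` [set 1]) =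
     (\int[P]_(om in X @^-1` A) (F (alpha0 + inner (X om) beta0))%:E)%E) ->
  (* w is a non-negative bounded (measurable) weight function *)
  (forall E : set R, measurable E -> weak_meas (w @^-1` E)) ->
  (forall f, 0 <= w f) -> (exists M : R, forall f, w f <= M) ->
  (* (A1) *)
  (exists M : R, forall t : R, 0 <= t -> `|rho t| <= M) ->
  {within (`[0%R, +oo[ : set R), continuous rho} ->
  (forall t : R, 0 < t -> is_derive t 1 rho (psi t)) ->
  {within (`[0%R, +oo[ : set R), continuous psi} ->
  (exists M : R, forall t : R, 0 <= t -> `|psi t| <= M) ->
  rho 0 = 0 ->
  (* (A3) *)
  (forall t : R, 0 <= t -> 0 <= psi t) ->
  (exists a A0 : R, ln 2 <= a /\ 0 < A0 /\ forall t : R, 0 < t < a -> A0 < psi t) ->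
  exists C0 : R, 0 < C0 /\
    forall (alpha : R) (beta : R -> R), L2 beta ->
      (Lobj P rho psi w X y alpha beta - Lobj P rho psi w X y alpha0 beta0
        >= C0%:E * pi2 P w X alpha beta alpha0 beta0)%E.
Proof.
move=> hL2 hX hy01 hym hb0 hcond hw hw0 [Mw hwb] [Mr hrhob] hrhoc hrho hpsic
  [Mp hpsib] hrho0 hpsi0 [a [A0 [ha [hA0 hA]]]].
exact: (@main_ineq R rho psi Mp Mr a A0 hrho hpsic hpsib hpsi0 ha hrhoc hrhob
  hA0 hA d Om P X y alpha0 beta0 w Mw hX hy01 hym hb0 hcond hw hw0 hwb).
Qed.
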